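(* Let $\Sigma$ be a system as in the context, $\mathcal G=\mathrm{im}(\mathcal{R}each(A,G))$, $\mathcal Q=\ker(\mathcal{O}bs_n(A,C))$, and let $\mathcal S_1,\dots,\mathcal S_\delta\subseteq\mathbb R^n$ be the generalized real eigenspaces of $A$ (one for each real eigenvalue and one for each pair of complex conjugate eigenvalues). Assume that for every $k$: ($\mathcal S_k\subseteq\mathcal G$ or $\mathcal S_k\cap\mathcal G=\{0\}$) and ($\mathcal S_k\subseteq\mathcal Q$ or $\mathcal S_k\cap\mathcal Q=\{0\}$). Let $\mathcal S_\Sigma$ be the direct sum of all $\mathcal S_k$ with $\mathcal S_k\subseteq\mathcal Q$ and $\mathcal S_k\cap\mathcal G=\{0\}$, and let $R$ be any real matrix with $n$ columns such that $\ker(R)=\mathcal S_\Sigma$. Then $\ker([R\ \ -R])$ is a total relation satisfying conditions $(h_0)$–$(h_5)$ below with $R_1=R_2=R$, and it has maximal dimension among all total relations $\mathcal R=\ker([R_1\ \ -R_2])\subseteq\mathbb R^n\times\mathbb R^n$ ($R_1,R_2$ with $n$ columns and the same number of rows) satisfying: $(h_0)$ $\mathrm{diag}(A,A)\mathcal R\subseteq\mathcal R$; $(h_1)$ $R_1B=R_2B$; $(h_2)$ $R_1G\mu=R_2G\mu$; $(h_3)$ $R_1GG^TR_1^T=R_2GG^TR_2^T$; $(h_4)$ $\mathcal R\subseteq\ker([C\ \ -C])$; $(h_5)$ $\mathcal G\cap\ker(R_i)=\{0\}$ for $i=1,2$.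
   Context: $\Sigma$: $x(t+1)=Ax(t)+Bu(t)+Gw(t)$, $y(t)=Cx(t)+\nu(t)$, $t\in\mathbb N$, $x\in\mathbb R^n$, $u\in\mathbb R^m$, $w\in\mathbb R^l$, $y,\nu\in\mathbb R^p$, where $(w(t))_t$ is i.i.d. $\mathcal N(\mu,I_l)$ and $(\nu(t))_t$ is i.i.d. $\mathcal N(0,\Psi)$. $\mathcal{R}each(A,G)=[G\ AG\ \cdots\ A^{n-1}G]$; $\mathcal{O}bs_n(A,C)$ is the matrix obtained by stacking $C,CA,\dots,CA^{n-1}$ vertically. A relation $\mathcal R\subseteq\mathbb R^n\times\mathbb R^n$ is total if every $x$ is a first component and every $x'$ a second component of some pair in $\mathcal R$. *)

(* Defs.v *)
From HB Require Import structures.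
From mathcomp Require Import all_boot all_order all_algebra.
From mathcomp Require Import reals.
Set Implicit Arguments. Unset Strict Implicit. Unset Printing Implicit Defensive.
Import Order.TTheory GRing.Theory Num.Theory.
Local Open Scope ring_scope.

Section Defs.
Variable R : realType.

(* Reach(A,G) = [G  AG  ...  A^(k-1) G]  (k blocks), built recursively as
   [G, A * Reach_{k-1}] ; column count k * l. *)
Fixpoint reach_k (n l : nat) (A : 'M[R]_n) (G : 'M[R]_(n, l)) (k : nat)
  : 'M[R]_(n, k * l) :=
  match k return 'M[R]_(n, k * l) with
  | 0 => 0
  | k'.+1 => row_mx G (A *m reach_k A G k')
  end.
Definition Reach (n l : nat) (A : 'M[R]_n) (G : 'M[R]_(n, l)) := reach_k A G n.

(* Obs_k(A,C) = [C; CA; ...; CA^(k-1)], built recursively as [C; Obs_{k-1} A]. *)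
Fixpoint obs_k (n p : nat) (A : 'M[R]_n) (C : 'M[R]_(p, n)) (k : nat)
  : 'M[R]_(k * p, n) :=
  match k return 'M[R]_(k * p, n) with
  | 0 => 0
  | k'.+1 => col_mx C (obs_k A C k' *m A)
  end.
Definition Obs (n p : nat) (A : 'M[R]_n) (C : 'M[R]_(p, n)) := obs_k A C n.

Definition in_im (n k : nat) (M : 'M[R]_(n, k)) (x : 'cV[R]_n) : Prop :=
  exists u : 'cV[R]_k, x = M *m u.
Definition in_ker (r n : nat) (M : 'M[R]_(r, n)) (x : 'cV[R]_n) : Prop :=
  M *m x = 0.

(* dimension of ker M (M acting on column vectors): rank of a matrix whose
   row space is {u^T | M u = 0} *)
Definition kerdim (r n : nat) (M : 'M[R]_(r, n)) : nat := \rank (kermx M^T).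

(* evaluation of a polynomial at a square matrix (valid for every n, incl. 0) *)
Definition peval (n : nat) (q : {poly R}) (A : 'M[R]_n) : 'M[R]_n :=
  \sum_(i < size q) q`_i *: A ^+ i.

(* Generalized real eigenspaces of A: one for each monic irreducible real
   factor q of the characteristic polynomial (q = X - lambda for a real
   eigenvalue lambda, q = (X - lambda)(X - conj lambda) for a pair of complex
   conjugate eigenvalues); the space is ker q(A)^n. *)
Definition real_eig_factor (n : nat) (A : 'M[R]_n) (q : {poly R}) : Prop :=
  q \is monic /\ irreducible_poly q /\ q %| char_poly A.
Definition in_geneig (n : nat) (A : 'M[R]_n) (q : {poly R}) (x : 'cV[R]_n) : Prop :=
  (peval q A) ^+ n *m x = 0.

Definition in_rel (r n : nat) (R1 R2 : 'M[R]_(r, n)) (x x' : 'cV[R]_n) : Prop :=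
  row_mx R1 (- R2) *m col_mx x x' = 0.

Definition total_rel (n : nat) (rel : 'cV[R]_n -> 'cV[R]_n -> Prop) : Prop :=
  (forall x, exists x', rel x x') /\ (forall x', exists x, rel x x').

Definition h_conditions (n m l p r : nat) (A : 'M[R]_n) (B : 'M[R]_(n, m))
  (G : 'M[R]_(n, l)) (C : 'M[R]_(p, n)) (mu : 'cV[R]_l)
  (R1 R2 : 'M[R]_(r, n)) : Prop :=
  (forall x x', in_rel R1 R2 x x' -> in_rel R1 R2 (A *m x) (A *m x')) /\
  R1 *m B = R2 *m B /\
  R1 *m G *m mu = R2 *m G *m mu /\
  R1 *m G *m G^T *m R1^T = R2 *m G *m G^T *m R2^T /\
  (forall x x', in_rel R1 R2 x x' -> in_rel C C x x') /\
  (forall x, in_im (Reach A G) x -> in_ker R1 x -> x = 0) /\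
           (forall x, in_im (Reach A G) x -> in_ker R2 x -> x = 0).

End Defs.

(* Main.v *)
Require Import Defs.
From HB Require Import structures.
From mathcomp Require Import all_boot all_order all_algebra.
From mathcomp Require Import reals.
Import Order.TTheory GRing.Theory Num.Theory.
Local Open Scope ring_scope.
Set Implicit Arguments. Unset Strict Implicit. Unset Printing Implicit Defensive.

Section Peval.
Variable R : realType.

Lemma peval_horner n (A : 'M[R]_n.+1) q : peval q A = horner_mx A q.
Proof.
rewrite /peval -[in RHS](coefK q) poly_def rmorph_sum; apply: eq_bigr => i _.
rewrite -mul_polyC rmorphM /= horner_mx_C rmorphXn /= horner_mx_X.
by rewrite -mulmxE mul_scalar_mx.
Qed.

Lemma mx00 (M N : 'M[R]_0) : M = N.
Proof. by rewrite [M]flatmx0 [N]flatmx0. Qed.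

Lemma pevalM n (A : 'M[R]_n) p q : peval (p * q) A = peval p A * peval q A.
Proof. case: n A => [|n] A; first exact: mx00. by rewrite !peval_horner rmorphM. Qed.
Lemma pevalD n (A : 'M[R]_n) p q : peval (p + q) A = peval p A + peval q A.
Proof. case: n A => [|n] A; first exact: mx00. by rewrite !peval_horner rmorphD. Qed.
Lemma pevalB n (A : 'M[R]_n) p q : peval (p - q) A = peval p A - peval q A.
Proof. case: n A => [|n] A; first exact: mx00. by rewrite !peval_horner rmorphB. Qed.
Lemma pevalC n (A : 'M[R]_n) c : peval c%:P A = c%:M.
Proof. case: n A => [|n] A; first exact: mx00. by rewrite !peval_horner horner_mx_C. Qed.
Lemma peval1 n (A : 'M[R]_n) : peval 1 A = 1.
Proof. case: n A => [|n] A; first exact: mx00. by rewrite !peval_horner rmorph1. Qed.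
Lemma pevalX n (A : 'M[R]_n) : peval 'X A = A.
Proof. case: n A => [|n] A; first exact: mx00. by rewrite !peval_horner horner_mx_X. Qed.
Lemma pevalXn n (A : 'M[R]_n) p k : peval (p ^+ k) A = peval p A ^+ k.
Proof. case: n A => [|n] A; first exact: mx00. by rewrite !peval_horner rmorphXn. Qed.
Lemma peval_char n (A : 'M[R]_n) : peval (char_poly A) A = 0.
Proof. case: n A => [|n] A; first exact: mx00. by rewrite !peval_horner Cayley_Hamilton. Qed.
Lemma peval_comm n (A : 'M[R]_n) p q : peval p A * peval q A = peval q A * peval p A.
Proof. by rewrite -!pevalM mulrC. Qed.

Lemma peval_mulv n (A : 'M[R]_n) p q (x : 'cV[R]_n) :
  peval (p * q) A *m x = peval p A *m (peval q A *m x).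
Proof. by rewrite pevalM mulmxA mulmxE. Qed.

End Peval.
Section Reach.
Variable R : realType.
Variables (n l : nat) (A : 'M[R]_n) (G : 'M[R]_(n, l)).

Lemma reach_kP k (x : 'cV[R]_n) : (exists u, x = reach_k A G k *m u) <->
  exists f : nat -> 'cV[R]_l, x = \sum_(i < k) A ^+ i *m (G *m f i).
Proof.
elim: k x => [|k IH] x.
  split=> [[u ->]|[f ->]]; first by exists (fun _ => 0); rewrite big_ord0 /= mul0mx.
  by exists 0; rewrite big_ord0 /= mul0mx.
split.
  move=> [u ->] /=.
  have -> : u = col_mx (usubmx (u : 'cV_(l + k * l))) (dsubmx (u : 'cV_(l + k * l))).
    by rewrite vsubmxK.
  rewrite mul_row_col.
  have [f Hf] := (IH (reach_k A G k *m dsubmx (u : 'cV_(l + k * l)))).1 (ex_intro _ _ erefl).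
  exists (fun i => if i is i'.+1 then f i' else usubmx (u : 'cV_(l + k * l))).
  rewrite big_ord_recl /= expr0 mul1mx -mulmxA Hf mulmx_sumr; congr (_ + _).
  by apply: eq_bigr => i _; rewrite /bump /= mulmxA ?add1n ?add0n exprS mulmxE.
move=> [f ->].
have [u2 Hu2] := (IH (\sum_(i < k) A ^+ i *m (G *m f i.+1))).2 (ex_intro _ (fun i => f i.+1) erefl).
exists (col_mx (f 0%N) u2) => /=.
rewrite mul_row_col big_ord_recl /= expr0 mul1mx -mulmxA -Hu2 mulmx_sumr; congr (_ + _).
by apply: eq_bigr => i _; rewrite /bump /= exprS -mulmxE !mulmxA.
Qed.


Definition spanG (x : 'cV[R]_n) :=
  exists f : nat -> 'cV[R]_l, x = \sum_(i < n) A ^+ i *m (G *m f i).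

Lemma spanG0 : spanG 0.
Proof. by exists (fun _ => 0); rewrite big1 // => i _; rewrite !mulmx0. Qed.

Lemma spanGD x y : spanG x -> spanG y -> spanG (x + y).
Proof.
move=> [f ->] [g ->]; exists (fun i => f i + g i); rewrite -big_split /=.
by apply: eq_bigr => i _; rewrite !mulmxDr.
Qed.

Lemma spanGZ c x : spanG x -> spanG (c *: x).
Proof.
move=> [f ->]; exists (fun i => c *: f i); rewrite scaler_sumr.
by apply: eq_bigr => i _; rewrite !scalemxAr.
Qed.

Lemma spanG_sum (I : eqType) (s : seq I) (F : I -> 'cV[R]_n) :
  (forall i, i \in s -> spanG (F i)) -> spanG (\sum_(i <- s) F i).
Proof.
elim: s => [|a s IH] H; first by rewrite big_nil; exact: spanG0.
rewrite big_cons; apply: spanGD; first by apply: H; rewrite inE eqxx.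
by apply: IH => i Hi; apply: H; rewrite inE Hi orbT.
Qed.

Lemma peval_wide (r : {poly R}) N : (size r <= N)%N ->
  peval r A = \sum_(i < N) r`_i *: A ^+ i.
Proof.
move=> H; rewrite /peval (big_ord_widen _ (fun i => r`_i *: A ^+ i) H) big_mkcond.
apply: eq_bigr => i _; case: ifP => // /negbT; rewrite -leqNgt => Hi.
by rewrite nth_default // scale0r.
Qed.

Lemma spanG_pow k w : spanG (A ^+ k *m (G *m w)).
Proof.
set c := char_poly A; set r := 'X^k %% c.
have Hk : A ^+ k = peval r A.
  have := divp_eq ('X^k) c; move/(congr1 (fun p => peval p A)).
  rewrite pevalD pevalM peval_char mulr0 add0r -/r => <-.
  by rewrite pevalXn pevalX.
have Hs : (size r <= n)%N.
  have := @ltn_modp _ ('X^k) c; rewrite -/r.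
  have -> : (c != 0) = true by rewrite -size_poly_gt0 size_char_poly.
  by rewrite size_char_poly ltnS => ->.
exists (fun i => r`_i *: w); rewrite Hk (peval_wide Hs) mulmx_suml.
by apply: eq_bigr => i _; rewrite -scalemxAl -!scalemxAr.
Qed.

Lemma spanGA x : spanG x -> spanG (A *m x).
Proof.
move=> [f ->]; rewrite mulmx_sumr; apply: spanG_sum => i _.
by rewrite mulmxA mulmxE -exprS; apply: spanG_pow.
Qed.

Lemma spanG_Apow i x : spanG x -> spanG (A ^+ i *m x).
Proof.
move=> H; elim: i => [|i IH]; first by rewrite expr0 mul1mx.
by rewrite exprS -mulmxE -mulmxA; apply: spanGA.
Qed.

Lemma spanG_peval p x : spanG x -> spanG (peval p A *m x).
Proof.
move=> H; rewrite /peval mulmx_suml; apply: spanG_sum => i _.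
by rewrite -scalemxAl; apply: spanGZ; apply: spanG_Apow.
Qed.

Lemma in_im_spanG x : in_im (Reach A G) x <-> spanG x.
Proof. exact: reach_kP. Qed.

End Reach.
From Stdlib Require Import Classical.
From mathcomp Require Import zify ring.
Section PolyFacts.
Variable R : realType.
Implicit Types f g q : {poly R}.

Lemma irr_scale q c : c != 0 -> irreducible_poly q -> irreducible_poly (c *: q).
Proof.
move=> c0 [H1 H2]; split; first by rewrite size_scale.
move=> d Hd Hdv; have Heq : c *: q %= q by apply: eqp_scale.
have Hdq : d %| q by rewrite -(eqp_dvdr _ Heq).
apply: (@eqp_trans _ q); [exact: H2 d Hd Hdq | by rewrite eqp_sym].
Qed.

Lemma exists_irr_factor f : (1 < size f)%N ->
  exists q, [/\ q \is monic, irreducible_poly q & q %| f].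
Proof.
elim: {f}(size f).+1 {-2}f (ltnSn (size f)) => // N IH f Hsz Hf.
have f0 : f != 0 by rewrite -size_poly_gt0 (ltn_trans _ Hf).
have [Hirr | Hnirr] := classic (irreducible_poly f).
  have lc0 : lead_coef f != 0 by rewrite lead_coef_eq0.
  exists ((lead_coef f)^-1 *: f); split.
  - by apply/monicP; rewrite lead_coefZ mulVf.
  - by apply: irr_scale => //; rewrite invr_eq0.
  - by rewrite dvdpZl // invr_eq0.
have : ~ (forall d : {poly R}, size d != 1%N -> d %| f -> d %= f).
  by move=> H; apply: Hnirr; split.
move/not_all_ex_not => [d Hd].
have Hd1 : size d != 1%N.
  by apply/negP => H1; apply: Hd => H; rewrite H1 in H.
have Hdv : d %| f.
  by case: (boolP (d %| f)) => // H; exfalso; apply: Hd => _ H'; rewrite H' in H.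
have Hne : ~~ (d %= f) by apply/negP => H; apply: Hd => _ _.
have d0 : d != 0 by apply: contraNneq f0 => d0; move: Hdv; rewrite d0 dvd0p.
have Hsd : (size d < size f)%N.
  rewrite ltn_neqAle dvdp_leq // andbT (dvdp_size_eqp Hdv) //.
have Hd2 : (1 < size d)%N.
  by move: d0 Hd1; rewrite -size_poly_gt0; case: (size d) => [|[|m]].
have [q [Hm Hi Hq]] := IH d (leq_trans Hsd (ltnSE Hsz)) Hd2.
by exists q; split => //; apply: dvdp_trans Hdv.
Qed.

Lemma split_pow f q : f != 0 -> (1 < size q)%N ->
  exists k g, f = q ^+ k * g /\ ~~ (q %| g).
Proof.
elim: {f}(size f).+1 {-2}f (ltnSn (size f)) => // N IH f Hsz f0 Hq.
have [Hqf | Hnqf] := boolP (q %| f); last by exists 0%N, f; rewrite expr0 mul1r.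
have q0 : q != 0 by rewrite -size_poly_gt0 (ltn_trans _ Hq).
have Hf : f = (f %/ q) * q by rewrite divpK.
have f'0 : f %/ q != 0 by apply: contraNneq f0 => H; rewrite Hf H mul0r.
have Hs : (size (f %/ q)%R < size f)%N.
  move: Hq; rewrite {2}Hf size_mul //; case: (size q) => [|[|m]] // _.
  by rewrite !addnS /= ltnS leq_addr.
have [k [g [Hg Hng]]] := IH (f %/ q) (leq_trans Hs (ltnSE Hsz)) f'0 Hq.
exists k.+1, g; split => //.
by rewrite Hf Hg exprS mulrAC [q ^+ k * q]mulrC.
Qed.

Lemma coprime_irr_monic q q' : q \is monic -> q' \is monic ->
  irreducible_poly q -> irreducible_poly q' -> q != q' -> coprimep q q'.
Proof.
move=> m m' i i' ne; rewrite irreducible_poly_coprime //.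
apply/negP => H.
have Hs : size q != 1%N by case: i => Hsz _; rewrite gtn_eqF.
have := i'.2 q Hs H; rewrite eqp_monic // => /eqP E.
by move: ne; rewrite E eqxx.
Qed.

End PolyFacts.

Lemma size_exp_ge (R : realType) (q : {poly R}) k : (1 < size q)%N -> (k < size (q ^+ k))%N.
Proof.
move=> Hq; have q0 : q != 0 by rewrite -size_poly_gt0 (ltn_trans _ Hq).
have : q ^+ k != 0 by rewrite expf_neq0.
rewrite -size_poly_gt0 => Hp.
rewrite -(ltn_predK Hp) ltnS size_exp.
by case: (size q) Hq => [|[|m]] // _; rewrite /= mulSn leq_addr.
Qed.

Section Decomp.
Variable R : realType.
Variables (n : nat) (A : 'M[R]_n).

Lemma decomp (f : {poly R}) : f %| char_poly A -> forall x : 'cV[R]_n,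
  peval f A *m x = 0 ->
  exists (s : seq {poly R}) (h : {poly R} -> {poly R}),
   (forall q, q \in s -> [/\ q \is monic, irreducible_poly q, q %| f &
        in_geneig A q (peval (h q) A *m x)]) /\
   x = \sum_(q <- s) peval (h q) A *m x.
Proof.
elim: {f}(size f).+1 {-2}f (ltnSn (size f)) => // N IH f Hsz Hfc x Hx.
have c0 : char_poly A != 0 by rewrite -size_poly_gt0 size_char_poly.
have f0 : f != 0 by apply: contraNneq c0 => E; move: Hfc; rewrite E dvd0p.
have [Hs1 | Hs1] := leqP (size f) 1.
  exists [::], (fun _ => 0); split => //; rewrite big_nil.
  move: Hx; rewrite [f]size1_polyC // pevalC mul_scalar_mx => /eqP.
  rewrite scaler_eq0 => /orP [/eqP H0|/eqP //].
  by move: f0; rewrite [f]size1_polyC // H0 polyC0 eqxx.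
have [q [qm qi qf]] := exists_irr_factor Hs1.
have Hq1 : (1 < size q)%N by case: qi.
have [k [g [Hfg Hqg]]] := split_pow f0 Hq1.
have g0 : g != 0 by apply: contraNneq f0 => E; rewrite Hfg E mulr0.
have q0 : q != 0 by rewrite -size_poly_gt0 (ltn_trans _ Hq1).
have k0 : (0 < k)%N.
  by case: k Hfg => // Hfg; move: qf; rewrite Hfg expr0 mul1r (negPf Hqg).
have Hcop : coprimep (q ^+ k) g.
  by apply: coprimep_expl; rewrite irreducible_poly_coprime.
have [[u1 u2] /= Huv] := Bezout_eq1_coprimepP _ _ Hcop.
have qk0 : q ^+ k != 0 by rewrite expf_neq0.
have Hk1 := size_exp_ge k Hq1.
have Hkn : (k <= n)%N.
  have : q ^+ k %| char_poly A by apply: dvdp_trans Hfc; rewrite Hfg dvdp_mulr.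
  move/(dvdp_leq c0); rewrite size_char_poly => H.
  by rewrite -ltnS (leq_trans Hk1 H).
set z1 := peval (u2 * g) A *m x.
set z2 := peval (u1 * q ^+ k) A *m x.
have Hx12 : x = z1 + z2.
  by rewrite /z1 /z2 -mulmxDl -pevalD addrC Huv peval1 mul1mx.
have Hgz2 : peval g A *m z2 = 0.
  rewrite /z2 -peval_mulv.
  have -> : g * (u1 * q ^+ k) = u1 * f by rewrite Hfg mulrCA [g * _]mulrC.
  by rewrite peval_mulv Hx mulmx0.
have Hsg : (size g < size f)%N.
  have H2 : (1 < size (q ^+ k))%N by exact: leq_ltn_trans k0 Hk1.
  rewrite Hfg size_mul //; case: (size (q ^+ k)) H2 => [|[|s]] // _.
  by rewrite addSn /= addSn ltnS leq_addl.
have Hgc : g %| char_poly A by apply: dvdp_trans Hfc; rewrite Hfg dvdp_mull.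
have [s' [h' [Hs' Hsum']]] := IH g (leq_trans Hsg (ltnSE Hsz)) Hgc z2 Hgz2.
have Hneq : forall r, r \in s' -> r != q.
  move=> r /Hs' [_ _ rg _]; apply: contraNneq Hqg => E; by rewrite -E.
exists (q :: s'), (fun r => if r == q then u2 * g else h' r * (u1 * q ^+ k)).
split.
  move=> r; rewrite inE; case: eqP => [-> _ | Hr /= Hin].
    split => //; rewrite /in_geneig -pevalXn -peval_mulv.
    have -> : q ^+ n * (u2 * g) = (q ^+ (n - k) * u2) * f.
      by rewrite Hfg -{1}(subnK Hkn) exprD; ring.
    by rewrite peval_mulv Hx mulmx0.
  have [rm ri rg rge] := Hs' r Hin.
  split => //; first by apply: dvdp_trans rg _; rewrite Hfg dvdp_mull.
  by rewrite peval_mulv.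
rewrite big_cons eqxx {1}Hx12; congr (_ + _).
rewrite {1}Hsum'; apply: eq_big_seq => r Hr.
by rewrite (negPf (Hneq r Hr)) peval_mulv.
Qed.

End Decomp.
Lemma kerdim_le (R : realType) r1 r2 n (R1 R2 : 'M[R]_(r1, n)) (RR : 'M[R]_(r2, n)) :
  (forall x : 'cV[R]_n, R2 *m x = 0 -> RR *m x = 0) ->
  (kerdim (row_mx R1 (- R2)) <= kerdim (row_mx RR (- RR)))%N.
Proof.
move=> H; rewrite /kerdim !mxrank_ker !mxrank_tr.
have h1 : (\rank (row_mx RR (- RR)) <= \rank RR)%N.
  have -> : row_mx RR (- RR) = RR *m row_mx 1%:M (- 1%:M).
    by rewrite mul_mx_row mulmx1 mulmxN mulmx1.
  exact: mxrankM_maxl.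
have h2 : (\rank R2 <= \rank (row_mx R1 (- R2)))%N.
  apply: leq_trans (mxrankM_maxl (row_mx R1 (- R2)) (col_mx 0 1%:M)).
  by rewrite mul_row_col mulmx0 mulmx1 add0r mxrank_opp.
have h3 : (\rank RR <= \rank R2)%N.
  set M := (kermx R2^T)^T.
  have HM : R2 *m M = 0.
    by have := mulmx_ker R2^T; move/(congr1 trmx); rewrite trmx_mul trmxK trmx0.
  have HM' : RR *m M = 0.
    have Hc : forall j, RR *m (M *m delta_mx j (0 : 'I_1)) = 0.
      by move=> j; apply: H; rewrite mulmxA HM mul0mx.
    apply/matrixP => i j; move: (congr1 (fun X : 'M[R]_(r2, 1) => X i 0) (Hc j)).
    rewrite mulmxA -colE /= mxE => ->; by rewrite !mxE.
  have K : (kermx R2^T <= kermx RR^T)%MS.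
    apply/sub_kermxP/eqP; rewrite -[kermx R2^T *m RR^T]trmxK trmx_mul [RR^T^T]trmxK -/M HM' trmx0.
    done.
  have := mxrankS K; rewrite !mxrank_ker !mxrank_tr.
  have := rank_leq_col R2; have := rank_leq_col RR; lia.
lia.
Qed.

Lemma obs_C (R : realType) n p (A : 'M[R]_n) (C : 'M[R]_(p, n)) x :
  in_ker (Obs A C) x -> C *m x = 0.
Proof.
rewrite /in_ker /Obs; case: n A C x => [|n'] A C x.
  by move=> _; apply/matrixP => i j; rewrite !mxE big_ord0.
by rewrite /= mul_col_mx => /eqP; rewrite -col_mx0 => /eqP /eq_col_mx [-> _].
Qed.

Section Main.
Variable R : realType.
Variables (n p : nat) (A : 'M[R]_n) (C : 'M[R]_(p, n)).

Lemma geneig0 q : in_geneig A q 0.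
Proof. by rewrite /in_geneig mulmx0. Qed.

Lemma geneigD q x y : in_geneig A q x -> in_geneig A q y -> in_geneig A q (x + y).
Proof. by rewrite /in_geneig mulmxDr => -> ->; rewrite addr0. Qed.

Lemma geneig_peval q r x : in_geneig A q x -> in_geneig A q (peval r A *m x).
Proof.
rewrite /in_geneig -!pevalXn -!peval_mulv mulrC peval_mulv => ->.
by rewrite mulmx0.
Qed.

Lemma geneigA q x : in_geneig A q x -> in_geneig A q (A *m x).
Proof. move=> H; have -> : A *m x = peval 'X A *m x by rewrite pevalX.
by apply: geneig_peval. Qed.

Lemma geneig_sum q (I : eqType) (s : seq I) (F : I -> 'cV[R]_n) :
  (forall i, i \in s -> in_geneig A q (F i)) -> in_geneig A q (\sum_(i <- s) F i).
Proof.
elim: s => [|a s IH] H; first by rewrite big_nil; exact: geneig0.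
rewrite big_cons; apply: geneigD; first by apply: H; rewrite inE eqxx.
by apply: IH => i Hi; apply: H; rewrite inE Hi orbT.
Qed.

Lemma geneig_disj q q' y : coprimep q q' -> in_geneig A q y -> in_geneig A q' y -> y = 0.
Proof.
move=> Hc; have Hc' : coprimep (q ^+ n) (q' ^+ n) by apply/coprimep_expl/coprimep_expr.
have [[u1 u2] /= Huv] := Bezout_eq1_coprimepP _ _ Hc'.
rewrite /in_geneig -!pevalXn => H1 H2.
have -> : y = peval 1 A *m y by rewrite peval1 mul1mx.
by rewrite -Huv pevalD mulmxDl !peval_mulv H1 H2 !mulmx0 addr0.
Qed.

Lemma obs_kP k (x : 'cV[R]_n) : (forall i, C *m (A ^+ i *m x) = 0) -> obs_k A C k *m x = 0.
Proof.
elim: k x => [|k IH] x H; first by rewrite /= mul0mx.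
have H0 : C *m x = 0 by have := H 0%N; rewrite expr0 mul1mx.
have H1 : obs_k A C k *m (A *m x) = 0.
  apply: IH => i; have := H i.+1; by rewrite exprSr -mulmxE -mulmxA.
by rewrite /= mul_col_mx -mulmxA H0 H1 col_mx0.
Qed.

Lemma filter_good (s : seq {poly R}) (y : {poly R} -> 'cV[R]_n) (P : {poly R} -> Prop) :
  (forall q, q \in s -> y q = 0 \/ P q) ->
  exists s', (forall q, q \in s' -> q \in s /\ P q) /\
    \sum_(q <- s) y q = \sum_(q <- s') y q.
Proof.
elim: s => [|a s IH] H; first by exists [::]; split.
have [s' [Hs' Hsum]] : exists s', (forall q, q \in s' -> q \in s /\ P q) /\
    \sum_(q <- s) y q = \sum_(q <- s') y q.
  by apply: IH => q Hq; apply: H; rewrite inE Hq orbT.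
have [Ha | Ha] := H a (mem_head a s).
  exists s'; split; last by rewrite big_cons Ha add0r.
  by move=> q /Hs' [H1 H2]; rewrite inE H1 orbT.
exists (a :: s'); split; last by rewrite !big_cons Hsum.
move=> q; rewrite inE => /orP [/eqP -> | /Hs' [H1 H2]]; first by rewrite mem_head.
by rewrite inE H1 orbT.
Qed.

End Main.

Lemma in_relE (R : realType) r n (R1 R2 : 'M[R]_(r, n)) x x' :
  in_rel R1 R2 x x' <-> R1 *m x = R2 *m x'.
Proof.
rewrite /in_rel mul_row_col mulNmx; split => [/eqP|->]; last by rewrite subrr.
by rewrite subr_eq0 => /eqP.
Qed.

Section Main2.
Variable R : realType.
Variables (n : nat) (A : 'M[R]_n).

Lemma ker_disj f g (y : 'cV[R]_n) : coprimep f g ->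
  peval f A *m y = 0 -> peval g A *m y = 0 -> y = 0.
Proof.
move=> Hc; have [[u1 u2] /= Huv] := Bezout_eq1_coprimepP _ _ Hc => H1 H2.
have -> : y = peval 1 A *m y by rewrite peval1 mul1mx.
by rewrite -Huv pevalD mulmxDl !peval_mulv H1 H2 !mulmx0 addr0.
Qed.

Lemma prod_kill (s : seq {poly R}) (w : {poly R} -> 'cV[R]_n) :
  (forall q, q \in s -> in_geneig A q (w q)) ->
  peval (\prod_(q <- s) q ^+ n) A *m \sum_(q <- s) w q = 0.
Proof.
elim: s => [|a s IH] H; first by rewrite !big_nil mulmx0.
rewrite !big_cons mulmxDr.
have Ha : in_geneig A a (w a) by apply: H; rewrite mem_head.
have Hs : peval (\prod_(q <- s) q ^+ n) A *m \sum_(q <- s) w q = 0.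
  by apply: IH => q Hq; apply: H; rewrite inE Hq orbT.
rewrite [X in _ + X]peval_mulv Hs mulmx0 addr0 mulrC peval_mulv.
by move: Ha; rewrite /in_geneig -pevalXn => ->; rewrite mulmx0.
Qed.

Lemma coprimep_prod_pow q (s : seq {poly R}) :
  (forall r, r \in s -> coprimep q r) -> coprimep (q ^+ n) (\prod_(r <- s) r ^+ n).
Proof.
elim: s => [|a s IH] H; first by rewrite big_nil coprimep1.
rewrite big_cons coprimepMr; apply/andP; split.
  by apply/coprimep_expl/coprimep_expr; apply: H; rewrite mem_head.
by apply: IH => r Hr; apply: H; rewrite inE Hr orbT.
Qed.

Lemma sum_disj q' (s : seq {poly R}) (w : {poly R} -> 'cV[R]_n) y :
  (forall q, q \in s -> coprimep q' q) ->
  (forall q, q \in s -> in_geneig A q (w q)) ->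
  in_geneig A q' y -> y = \sum_(q <- s) w q -> y = 0.
Proof.
move=> Hc Hw Hy Hsum.
apply: (ker_disj (coprimep_prod_pow Hc)).
  by move: Hy; rewrite /in_geneig pevalXn.
by rewrite Hsum; apply: prod_kill.
Qed.

End Main2.

Theorem theorem8 (R : realType) (n m l p : nat)
  (A : 'M[R]_n) (B : 'M[R]_(n, m)) (G : 'M[R]_(n, l)) (C : 'M[R]_(p, n))
  (mu : 'cV[R]_l) :
  (* dichotomy hypotheses on every generalized real eigenspace *)
  (forall q : {poly R}, real_eig_factor A q ->
     ((forall x, in_geneig A q x -> in_im (Reach A G) x) \/
      (forall x, in_geneig A q x -> in_im (Reach A G) x -> x = 0)) /\
     ((forall x, in_geneig A q x -> in_ker (Obs A C) x) \/
      (forall x, in_geneig A q x -> in_ker (Obs A C) x -> x = 0))) ->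
  forall (r : nat) (RR : 'M[R]_(r, n)),
  (* ker RR = S_Sigma = sum of the S_q with S_q in Q and S_q /\ G = 0 *)
  (forall x : 'cV[R]_n, in_ker RR x <->
     exists (s : seq {poly R}) (v : {poly R} -> 'cV[R]_n),
       [/\ forall q, q \in s ->
             [/\ real_eig_factor A q,
                 (forall y, in_geneig A q y -> in_ker (Obs A C) y),
                 (forall y, in_geneig A q y -> in_im (Reach A G) y -> y = 0)
               & in_geneig A q (v q)]
         & x = \sum_(q <- s) v q]) ->
  [/\ total_rel (in_rel RR RR),
      h_conditions A B G C mu RR RR
    & forall (r' : nat) (R1 R2 : 'M[R]_(r', n)),
        total_rel (in_rel R1 R2) -> h_conditions A B G C mu R1 R2 ->
        (kerdim (row_mx R1 (- R2)) <= kerdim (row_mx RR (- RR)))%N].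
Proof.
move=> Hdich r RR HRR.
have h5 : forall x, in_im (Reach A G) x -> in_ker RR x -> x = 0.
  move=> x Hg /HRR [s [v [Hs Hsum]]].
  have Hgx : spanG A G x by apply/in_im_spanG.
  have Hx0 : peval (char_poly A) A *m x = 0 by rewrite peval_char mul0mx.
  have [s2 [h [Hs2 Hsum2]]] := decomp (dvdpp (char_poly A)) Hx0.
  rewrite Hsum2 big1_seq // => q' /andP [_ Hq'].
  have [qm qi qc qg] := Hs2 q' Hq'.
  have Hrf : real_eig_factor A q' by [].
  have Hy : in_im (Reach A G) (peval (h q') A *m x).
    by apply/in_im_spanG; apply: spanG_peval.
  have [[HGl | HGr] _] := Hdich q' Hrf; last by apply: HGr.
  have [Hin | Hnin] := boolP (q' \in s).
    by have [_ _ HG _] := Hs q' Hin; apply: HG => //; apply: HGl.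
  apply: (sum_disj (s := s) (w := fun q => peval (h q') A *m v q) _ _ qg).
  - move=> q Hq; have [[qm1 [qi1 _]] _ _ _] := Hs q Hq.
    apply: coprime_irr_monic => //; apply: contraNneq Hnin => ->; exact: Hq.
  - move=> q Hq; have [_ _ _ Hv] := Hs q Hq; exact: geneig_peval.
  - by rewrite {1}Hsum mulmx_sumr.
split.
- by split => x; exists x; apply/in_relE.
- split; [|split; [by []|split; [by []|split; [by []|split; [|split]]]]] => //.
  + move=> x x' /in_relE Hx; apply/in_relE.
    have : in_ker RR (x - x') by rewrite /in_ker mulmxBr Hx subrr.
    move/HRR => [s [v [Hs Hsum]]].
    have : in_ker RR (A *m (x - x')).
      apply/HRR; exists s, (fun q => A *m v q); split.
        by move=> q /Hs [a b c d]; split => //; exact: geneigA.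
      by rewrite Hsum mulmx_sumr.
    by rewrite /in_ker !mulmxBr => /eqP; rewrite subr_eq0 => /eqP.
  + move=> x x' /in_relE Hx; apply/in_relE.
    have : in_ker RR (x - x') by rewrite /in_ker mulmxBr Hx subrr.
    move/HRR => [s [v [Hs Hsum]]].
    have : C *m (x - x') = 0.
      rewrite Hsum mulmx_sumr big1_seq // => q /andP [_ Hq].
      have [_ HQ _ Hv] := Hs q Hq; apply: obs_C; exact: HQ.
    by rewrite mulmxBr => /eqP; rewrite subr_eq0 => /eqP.
move=> r' R1 R2 _ [h0 [_ [_ [_ [h4 [_ h5b]]]]]].
apply: kerdim_le => x Hx.
have VA : forall y : 'cV[R]_n, R2 *m y = 0 -> R2 *m (A *m y) = 0.
  move=> y Hy; have H0 : in_rel R1 R2 0 y by apply/in_relE; rewrite mulmx0 Hy.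
  by move: (h0 _ _ H0) => /in_relE; rewrite !mulmx0.
have VC : forall y : 'cV[R]_n, R2 *m y = 0 -> C *m y = 0.
  move=> y Hy; have H0 : in_rel R1 R2 0 y by apply/in_relE; rewrite mulmx0 Hy.
  by move: (h4 _ _ H0) => /in_relE; rewrite !mulmx0.
have VAi : forall i (y : 'cV[R]_n), R2 *m y = 0 -> R2 *m (A ^+ i *m y) = 0.
  move=> i y Hy; elim: i => [|i IH]; first by rewrite expr0 mul1mx.
  by rewrite exprS -mulmxE -mulmxA; apply: VA.
have Vp : forall q (y : 'cV[R]_n), R2 *m y = 0 -> R2 *m (peval q A *m y) = 0.
  move=> q y Hy; rewrite /peval mulmx_suml mulmx_sumr big1 // => i _.
  by rewrite -scalemxAl -scalemxAr VAi // scaler0.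
have VQ : forall y : 'cV[R]_n, R2 *m y = 0 -> in_ker (Obs A C) y.
  by move=> y Hy; rewrite /in_ker /Obs; apply: obs_kP => i; apply: VC; apply: VAi.
have Hx0 : peval (char_poly A) A *m x = 0 by rewrite peval_char mul0mx.
have [s2 [h [Hs2 Hsum2]]] := decomp (dvdpp (char_poly A)) Hx0.
apply/HRR.
have Hgood : forall q, q \in s2 -> peval (h q) A *m x = 0 \/
    [/\ real_eig_factor A q,
        (forall y, in_geneig A q y -> in_ker (Obs A C) y),
        (forall y, in_geneig A q y -> in_im (Reach A G) y -> y = 0)
      & in_geneig A q (peval (h q) A *m x)].
  move=> q Hq; have [qm qi qc qg] := Hs2 q Hq.
  have Vy := Vp q x Hx; have Vy' := Vp (h q) x Hx.
  have Hrf : real_eig_factor A q by [].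
  have [[HGl | HGr] [HQl | HQr]] := Hdich q Hrf.
  - by left; apply: h5b => //; apply: HGl.
  - by left; apply: h5b => //; apply: HGl.
  - by right; split.
  - by left; apply: HQr => //; apply: VQ.
have [s' [Hs' Hsum']] := filter_good Hgood.
exists s', (fun q => peval (h q) A *m x); split.
  by move=> q /Hs' [_ H].
by rewrite {1}Hsum2 Hsum'.
Qed.
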